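(* Let $s\in\mathbb{Z}$, and let $x\in G_{\alpha_s}$ and $y\in G_{\alpha_{s+1}}$ be such that $x\in \mathrm{Vor}_{G_{\alpha_{s+1}}}(y)$. Then $\mathrm{Vor}_{G_{\alpha_s}}(x)\subset \mathrm{Vor}_{G_{\alpha_{s+1}}}(y)$.
   Context: Fix $d\ge 1$, $\lambda>0$ and scales $\alpha_s:=\lambda 2^s$, $s\in\mathbb{Z}$. The grids $(G_{\alpha_s})_{s\in\mathbb{Z}}$ are subsets of $\mathbb{R}^d$ with $G_{\alpha_0}=\lambda\mathbb{Z}^d$ and, for every $s$, $G_{\alpha_{s+1}}=2(G_{\alpha_s}-O_s)+O_s+\frac{\alpha_s}{2}\varepsilon_s$ for some point $O_s\in G_{\alpha_s}$ and some sign vector $\varepsilon_s\in\{-1,+1\}^d$. Thus each $G_{\alpha_s}$ is a translate of $\alpha_s\mathbb{Z}^d$. For a grid $G$ and $x\in G$, $\mathrm{Vor}_G(x)$ denotes the Voronoi cell of $x$ with respect to $G$, i.e. the closed axis-parallel cube of side length $\alpha_s$ centered at $x$ when $G=G_{\alpha_s}$. *)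

(* Defs.v *)
From mathcomp Require Import all_boot all_order all_algebra.
From mathcomp Require Import reals.
Set Implicit Arguments. Unset Strict Implicit. Unset Printing Implicit Defensive.
Import Order.TTheory GRing.Theory Num.Theory.
Local Open Scope ring_scope.

Definition pt (R : realType) (d : nat) := 'I_d -> R.

Definition gridset (R : realType) (d : nat) := pt R d -> Prop.

Definition alpha (R : realType) (lam : R) (s : int) : R := lam * (2 : R) ^ s.

Definition scaled_lattice (R : realType) (d : nat) (lam : R) : gridset R d :=
  fun p => exists k : 'I_d -> int, forall i, p i = lam * (k i)%:~R.

Definition dist2 (R : realType) (d : nat) (p q : pt R d) : R :=
  \sum_(i < d) (p i - q i) ^+ 2.

Definition Vor (R : realType) (d : nat) (G : gridset R d) (x : pt R d) : gridset R d :=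
  fun z => forall g, G g -> dist2 z x <= dist2 z g.

(* Main.v *)
Require Import Defs.
From mathcomp Require Import all_boot all_order all_algebra.
From mathcomp Require Import reals.
From mathcomp Require Import zify ring lra.
From Stdlib Require Import FunctionalExtensionality.
Set Implicit Arguments. Unset Strict Implicit.
Import Order.TTheory GRing.Theory Num.Theory.
Local Open Scope ring_scope.

Lemma int5 (R : realType) (k : int) :
  (k%:~R : R) <= -2 \/ (k%:~R : R) = -1 \/ (k%:~R : R) = 0 \/ (k%:~R : R) = 1 \/ 2 <= (k%:~R : R).
Proof.
have : (k <= -2 \/ k = -1 \/ k = 0 \/ k = 1 \/ 2 <= k)%R by lia.
case=> [h|[->|[->|[->|h]]]].
- left. have := h. rewrite -(ler_int R). by [].
- by right; left.
- by right; right; left.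
- by right; right; right; left.
- right; right; right; right. by rewrite -(ler_int R) in h.
Qed.

Definition Lat (R : realType) (d : nat) (b : R) (c : pt R d) (p : pt R d) :=
  exists k : 'I_d -> int, forall i, p i = c i + b * (k i)%:~R.

Lemma coord_ineq (R : realType) (b t : R) (k : int) :
  0 < b -> `|t| <= b / 2 -> t ^+ 2 <= (t - b * k%:~R) ^+ 2.
Proof.
move=> hb; rewrite ler_norml => /andP [h1 h2].
have hw : b * k%:~R <= - (2 * b) \/ b * k%:~R = - b \/ b * k%:~R = 0 \/ b * k%:~R = b \/ 2 * b <= b * k%:~R.
  case: (int5 R k) => [h|[->|[->|[->|h]]]].
  - left; nra.
  - by right; left; ring.
  - by right; right; left; ring.
  - by right; right; right; left; ring.
  - right; right; right; right; nra.
set w := b * k%:~R in hw *.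
case: hw => [h|[h|[h|[h|h]]]]; nra.
Qed.

Lemma dist2_single (R : realType) (d : nat) (z g x : pt R d) (i : 'I_d) :
  (forall j, j != i -> g j = x j) ->
  dist2 z g = dist2 z x - (z i - x i) ^+ 2 + (z i - g i) ^+ 2.
Proof.
move=> hg; rewrite /dist2 (bigD1 i) //= [in RHS](bigD1 i) //=.
rewrite (eq_bigr (fun j => (z j - x j) ^+ 2)); last by move=> j /hg ->.
ring.
Qed.

Lemma vor_box (R : realType) (d : nat) (P : gridset R d) (b : R) (c : pt R d)
  (y z : pt R d) (i : 'I_d) :
  0 < b -> (forall p, P p <-> Lat b c p) -> P y -> Vor P y z ->
  `|z i - y i| <= b / 2.
Proof.
move=> hb hP hy hV.
have [ky hky] := (hP y).1 hy.
have key : forall e : int, e = 1 \/ e = -1 ->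
    (z i - y i) ^+ 2 <= (z i - y i - b * e%:~R) ^+ 2.
  move=> e he.
  pose g := fun j => c j + b * (ky j + (j == i)%:Z * e)%:~R.
  have hPg : P g by apply/(hP g); exists (fun j => ky j + (j == i)%:Z * e).
  have := hV g hPg.
  rewrite (@dist2_single _ _ z g y i); last first.
    move=> j hj; rewrite /g hky (negbTE hj) mul0r addr0 //.
  have -> : g i = y i + b * e%:~R.
    by rewrite /g hky eqxx mul1r intrD; ring.
  have -> : z i - (y i + b * e%:~R) = z i - y i - b * e%:~R by ring.
  lra.
have h1 := key 1 (or_introl erefl).
have h2 := key (-1) (or_intror erefl).
move: h1 h2; rewrite intrN /=.
rewrite ler_norml; set t := z i - y i => h1 h2.
apply/andP; split; nra.
Qed.

Lemma box_vor (R : realType) (d : nat) (P : gridset R d) (b : R) (c : pt R d)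
  (y z : pt R d) :
  0 < b -> (forall p, P p <-> Lat b c p) -> P y ->
  (forall i, `|z i - y i| <= b / 2) -> Vor P y z.
Proof.
move=> hb hP hy hz g hg.
have [ky hky] := (hP y).1 hy.
have [kg hkg] := (hP g).1 hg.
rewrite /dist2; apply: ler_sum => i _.
have -> : z i - g i = (z i - y i) - b * (kg i - ky i)%:~R.
  by rewrite hkg hky intrD intrN; ring.
exact: coord_ineq.
Qed.

Theorem lemma3 (R : realType) (d : nat) (hd : (1 <= d)%N) (lam : R) (hlam : 0 < lam)
  (G : int -> gridset R d) (O : int -> pt R d) (eps : int -> pt R d)
  (hG0 : forall p, G 0 p <-> scaled_lattice lam p)
  (hO : forall s, G s (O s))
  (heps : forall s i, eps s i = 1 \/ eps s i = -1)
  (hstep : forall s p, G (s + 1) p <->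
     exists q, G s q /\
       forall i, p i = 2 * (q i - O s i) + O s i + alpha lam s / 2 * eps s i)
  (s : int) (x y : pt R d)
  (hx : G s x) (hy : G (s + 1) y) (hxy : Vor (G (s + 1)) y x) :
  forall z, Vor (G s) x z -> Vor (G (s + 1)) y z.
Proof.
have h2u : (2 : R) \is a GRing.unit by rewrite unitfE pnatr_eq0.
have alS : forall t, alpha lam (t + 1) = 2 * alpha lam t.
  by move=> t; rewrite /alpha exprzDr // expr1z; ring.
have alpos : forall t, 0 < alpha lam t.
  by move=> t; rewrite /alpha mulr_gt0 // exprz_gt0.
pose St t := exists c, forall p, G t p <-> Lat (alpha lam t) c p.
have up : forall t, St t -> St (t + 1).
  move=> t [c hc].
  exists (fun i => 2 * (c i - O t i) + O t i + alpha lam t / 2 * eps t i).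
  move=> p; rewrite hstep alS; split.
    case=> q [/hc [k hk] hp]; exists k => i; rewrite hp hk; ring.
  case=> k hk; exists (fun i => c i + alpha lam t * (k i)%:~R); split.
    by apply/hc; exists k.
  by move=> i; rewrite hk; ring.
have down : forall t, St (t + 1) -> St t.
  move=> t [c hc].
  exists (fun i => (c i + O t i - alpha lam t / 2 * eps t i) / 2).
  move=> p; split.
    move=> hp.
    have : G (t + 1) (fun i => 2 * (p i - O t i) + O t i + alpha lam t / 2 * eps t i).
      by apply/hstep; exists p.
    move/hc => [k hk]; exists k => i; have := hk i; rewrite alS => e.
    have -> : p i = ((2 * (p i - O t i) + O t i + alpha lam t / 2 * eps t i)
                     + O t i - alpha lam t / 2 * eps t i) / 2 by field.
    by rewrite e; field.
  case=> k hk.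
  have : G (t + 1) (fun i => 2 * (p i - O t i) + O t i + alpha lam t / 2 * eps t i).
    by apply/hc; exists k => i; rewrite hk alS; field.
  move/hstep => [q [hq e]].
  suff -> : p = q by [].
  apply: functional_extensionality => i.
  have := e i => /= e'; lra.
have S0 : St 0.
  exists (fun _ => 0) => p; rewrite hG0 /scaled_lattice /alpha expr0z mulr1.
  by split; case=> k hk; exists k => i; rewrite hk ?add0r.
have Sall : forall t, St t.
  have posn : forall n : nat, St n.
    elim=> [|n ih] //; rewrite -addn1 PoszD; exact: up.
  have negn : forall n : nat, St (- n%:Z).
    elim=> [|n ih] //; apply: down.
    by have -> : - (n.+1 : int) + 1 = - n%:Z by rewrite -addn1 PoszD; ring.
  by case=> n; [exact: posn | rewrite NegzE; exact: negn].
have [c hc] := Sall s.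
have [c' hc'] := Sall (s + 1).
move=> z hz.
apply: (box_vor (b := alpha lam (s + 1)) (c := c')) => // i.
have hzx := vor_box i (alpos s) hc hx hz.
have hxy' := vor_box i (alpos (s + 1)) hc' hy hxy.
rewrite alS in hxy' *.
have [kx hkx] := (hc x).1 hx.
have [kO hkO] := (hc (O s)).1 (hO s).
have [q [hq hyq]] := (hstep s y).1 hy.
have [kq hkq] := (hc q).1 hq.
set a := alpha lam s in hzx hxy' hkx hkO hkq hyq *.
have ha : 0 < a := alpos s.
have hyx : y i - x i = a * (2 * kq i - kO i - kx i)%:~R + a / 2 * eps s i.
  rewrite hyq hkq hkO hkx !intrD !intrN intrM; ring.
move: hzx hxy'; rewrite !ler_norml.
have -> : z i - y i = (z i - x i) - (y i - x i) by ring.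
have -> : x i - y i = - (y i - x i) by ring.
rewrite hyx.
set u := z i - x i.
have hw : forall k : int, a * k%:~R <= - (2 * a) \/ a * k%:~R = - a \/ a * k%:~R = 0 \/ a * k%:~R = a \/ 2 * a <= a * k%:~R.
  move=> k; case: (int5 R k) => [h|[->|[->|[->|h]]]].
  - left; nra.
  - by right; left; ring.
  - by right; right; left; ring.
  - by right; right; right; left; ring.
  - right; right; right; right; nra.
move: (hw (2 * kq i - kO i - kx i)); set w := a * _ => hw'.
move=> /andP [h1 h2] /andP [h3 h4].
case: (heps s i) => he; rewrite he in h3 h4 *;
case: hw' => [h|[h|[h|[h|h]]]]; apply/andP; split; lra.
Qed.
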